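(* Let $S$ be a monoid such that the word $xyyx$ is an isoterm for $S$. Let $\mathbf u$ be a word and $x,y\in\mathrm{con}(\mathbf u)$ distinct variables such that: (i) each of $x,y$ occurs at most twice in $\mathbf u$; (ii) ${}_{1\mathbf u}x<_{\mathbf u}{}_{1\mathbf u}y$; (iii) if both $x$ and $y$ occur twice in $\mathbf u$, then $\mathbf u$ contains a linear variable $t$ with ${}_{1\mathbf u}y<_{\mathbf u}{}_{\mathbf u}t<_{\mathbf u}{}_{2\mathbf u}y$ and ${}_{2\mathbf u}x<_{\mathbf u}{}_{\mathbf u}t<_{\mathbf u}{}_{2\mathbf u}y$. Then the set $\{{}_{1\mathbf u}x,{}_{1\mathbf u}y\}$ is stable in $\mathbf u$ with respect to $S$.
   Context: Variables are letters of a countably infinite alphabet; words are elements of the free semigroup on it. A monoid $S$ satisfies $\mathbf u\approx\mathbf v$ if both sides are equal under every evaluation of variables in $S$. A word $\mathbf w$ is an isoterm for $S$ if $S$ satisfies no identity $\mathbf w\approx\mathbf w'$ with $\mathbf w'\ne\mathbf w$. $\mathrm{occ}_{\mathbf u}(x)$ is the number of occurrences of $x$ in $\mathbf u$, $\mathrm{con}(\mathbf u)$ the set of variables occurring in $\mathbf u$; $t$ is linear in $\mathbf u$ if it occurs exactly once, ${}_{\mathbf u}t$ denoting that occurrence. ${}_{i\mathbf u}x$ is the $i$-th occurrence of $x$ in $\mathbf u$; $<_{\mathbf u}$ is the order of occurrences by position. $l_{\mathbf u,\mathbf v}$ maps ${}_{i\mathbf u}x\mapsto{}_{i\mathbf v}x$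 for $i\le\min(\mathrm{occ}_{\mathbf u}(x),\mathrm{occ}_{\mathbf v}(x))$. A set $X$ of occurrences in $\mathbf u$ is stable in $\mathbf u$ with respect to $S$ if for every identity $\mathbf u\approx\mathbf v$ satisfied by $S$: each variable having an occurrence in $X$ occurs the same number of times in $\mathbf u$ and $\mathbf v$, and $l_{\mathbf u,\mathbf v}$ is defined on $X$ and is an order isomorphism from $(X,<_{\mathbf u})$ onto $(l_{\mathbf u,\mathbf v}(X),<_{\mathbf v})$. *)

(* Defs.v *)
From mathcomp Require Import all_boot.
Set Implicit Arguments. Unset Strict Implicit. Unset Printing Implicit Defensive.

Record monoid := Monoid {
  mcar :> Type;
  mmul : mcar -> mcar -> mcar;
  mone : mcar;
  mmulA : forall a b c, mmul a (mmul b c) = mmul (mmul a b) c;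
  mmul1 : forall a, mmul mone a = a;
  mmulr1 : forall a, mmul a mone = a }.

(* Variables are natural numbers (a countably infinite alphabet);
   words are nonempty sequences of variables (free semigroup). *)
Definition word := seq nat.
Definition is_word (w : word) : bool := w != [::].

Definition eval (S : monoid) (phi : nat -> S) (w : word) : S :=
  foldr (fun x acc => mmul (phi x) acc) (mone S) w.

Definition satisfies (S : monoid) (u v : word) : Prop :=
  forall phi : nat -> S, eval phi u = eval phi v.

Definition isoterm (S : monoid) (w : word) : Prop :=
  forall w' : word, is_word w' -> satisfies S w w' -> w' = w.

Definition occ (u : word) (x : nat) : nat := count_mem x u.

(* An occurrence is a pair (x, i) meaning the i-th occurrence of x (i >= 1). *)
Definition occurrence := (nat * nat)%type.

(* position (0-based) in u of the i-th occurrence (1-based) of x *)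
Definition pos (u : word) (o : occurrence) : nat :=
  nth 0 [seq j <- iota 0 (size u) | nth 0 u j == o.1] o.2.-1.

Definition is_occ (u : word) (o : occurrence) : bool :=
  (0 < o.2) && (o.2 <= occ u o.1).

(* X is stable in u with respect to S: for every identity u ~ v of S,
   each variable of X has the same number of occurrences in u and v,
   l_{u,v} is defined on X, and l_{u,v} is an order isomorphism from
   (X, <_u) onto (l_{u,v}(X), <_v).  Since l_{u,v} maps (x,i) to (x,i),
   it is injective; so being an order isomorphism onto its image amounts
   to preserving and reflecting the strict order. *)
Definition stable (S : monoid) (u : word) (X : seq occurrence) : Prop :=
  (forall o, o \in X -> is_occ u o) /\
  forall v : word, is_word v -> satisfies S u v ->
    (forall o, o \in X -> occ u o.1 = occ v o.1) /\
    (forall o, o \in X -> is_occ v o) /\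
    (forall o1 o2, o1 \in X -> o2 \in X -> (pos u o1 < pos u o2) = (pos v o1 < pos v o2)).

(* Main.v *)
Require Import Defs.
From mathcomp Require Import all_boot.
Set Implicit Arguments. Unset Strict Implicit.

Section G.
Variable S : monoid.

Lemma eval_cat (phi : nat -> S) s1 s2 : eval phi (s1 ++ s2) = mmul (eval phi s1) (eval phi s2).
Proof. elim: s1 => [|z s IH] /=; first by rewrite mmul1. by rewrite IH mmulA. Qed.

Lemma eval_fl (phi : nat -> S) (sig : nat -> word) p :
  eval phi (flatten [seq sig z | z <- p]) = eval (fun z => eval phi (sig z)) p.
Proof. elim: p => [|z p IH] //=. by rewrite eval_cat IH. Qed.

Lemma sat_ctx p q a b (sig : nat -> word) : satisfies S p q ->
  satisfies S (a ++ flatten [seq sig z | z <- p] ++ b) (a ++ flatten [seq sig z | z <- q] ++ b).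
Proof. move=> H phi. by rewrite !eval_cat !eval_fl H. Qed.

Lemma eval_pmap (pi : nat -> option nat) (phi : nat -> S) w :
  eval phi (pmap pi w) = eval (fun z => oapp phi (mone S) (pi z)) w.
Proof. elim: w => [|z w IH] //=. case: (pi z) => [c|] /=; by rewrite IH ?mmul1. Qed.

Lemma sat_pmap pi u v : satisfies S u v -> satisfies S (pmap pi u) (pmap pi v).
Proof. move=> H phi. by rewrite !eval_pmap H. Qed.

Lemma sat_sym u v : satisfies S u v -> satisfies S v u.
Proof. by move=> H phi; rewrite H. Qed.
End G.

Lemma count_pmap (pi : nat -> option nat) c w :
  count_mem c (pmap pi w) = count (fun z => pi z == Some c) w.
Proof.
elim: w => [|z w IH] //=. case: (pi z) => [d|] /=; rewrite IH //.
Qed.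

Definition pl (w : word) a := [seq j <- iota 0 (size w) | nth 0 w j == a].

Lemma pl_cons z w a : pl (z :: w) a = (if z == a then [:: 0] else [::]) ++ map succn (pl w a).
Proof.
rewrite /pl /= -add1n iotaDl filter_map /=.
have -> : [seq j <- iota 0 (size w) | preim (addn 1) (fun j => nth 0 (z :: w) j == a) j]
   = [seq j <- iota 0 (size w) | nth 0 w j == a] by apply: eq_filter => j.
by case: (z == a).
Qed.

Lemma size_pl w a : size (pl w a) = occ w a.
Proof.
elim: w => [|z w IH]; first by rewrite /pl.
rewrite pl_cons /occ /= size_cat size_map IH. by case: (z == a).
Qed.

Lemma occ_cons z w a : occ (z :: w) a = (z == a) + occ w a.
Proof. by []. Qed.

Lemma pos_cons z w a i : 0 < i -> i <= occ (z :: w) a ->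
  pos (z :: w) (a, i) = if z == a then (if i == 1 then 0 else (pos w (a, i.-1)).+1)
                        else (pos w (a, i)).+1.
Proof.
move=> i0 iocc.
have P : forall w k, pos w (a, k) = nth 0 (pl w a) k.-1 by [].
rewrite !P pl_cons.
rewrite occ_cons in iocc.
case: (z == a) iocc => /= iocc.
- case: i i0 iocc => [|[|i]] //= _ iocc.
  by rewrite (nth_map 0) // size_pl -ltnS.
- by rewrite (nth_map 0) // size_pl; case: i i0 iocc.
Qed.

Section T.
Variables (pi : nat -> option nat) (a b a' b' : nat).
Hypotheses (hab : a != b) (ha : forall z, (pi z == Some a') = (z == a))
  (hb : forall z, (pi z == Some b') = (z == b)).

Lemma occ_pmapA w : occ (pmap pi w) a' = occ w a.
Proof. by rewrite /occ count_pmap; apply: eq_count => z; rewrite ha. Qed.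
Lemma occ_pmapB w : occ (pmap pi w) b' = occ w b.
Proof. by rewrite /occ count_pmap; apply: eq_count => z; rewrite hb. Qed.

Lemma pos_pmap w : forall i j, 0 < i <= occ w a -> 0 < j <= occ w b ->
  (pos w (a, i) < pos w (b, j)) = (pos (pmap pi w) (a', i) < pos (pmap pi w) (b', j)).
Proof.
elim: w => [|z w IH] i j /andP[i0 ia] /andP[j0 jb]; first by case: i i0 ia.
have ia' := ia; have jb' := jb.
rewrite -occ_pmapA in ia'; rewrite -occ_pmapB in jb'.
rewrite (pos_cons i0 ia) (pos_cons j0 jb).
rewrite occ_cons in ia; rewrite occ_cons in jb.
rewrite /= in ia' jb' *.
case E: (pi z) ia' jb' => [c|] /= ia' jb'.
- rewrite (pos_cons i0 ia') (pos_cons j0 jb').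
  have ca : (c == a') = (z == a) by rewrite -ha E (inj_eq (@Some_inj _)).
  have cb : (c == b') = (z == b) by rewrite -hb E (inj_eq (@Some_inj _)).
  rewrite ca cb.
  clear ia' jb'.
  case: (eqVneq z a) ia jb => [->|nza] ia jb.
  + rewrite (negbTE hab) /= in jb *.
    case: (eqVneq i 1) => [//|ni1].
    rewrite !ltnS; apply: IH; last by rewrite j0.
    by case: i i0 ia ni1 => [|[|i]].
  + case: (eqVneq z b) ia jb => [zb|nzb] ia jb /=.
    * case: (eqVneq j 1) => [//|nj1].
      rewrite !ltnS; apply: IH; first by rewrite i0.
      by case: j j0 jb nj1 => [|[|j]].
    * by rewrite !ltnS; apply: IH; rewrite ?i0 ?j0.
- have nza : z != a by apply/negP => /eqP za; move: (ha z); rewrite E za eqxx.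
  have nzb : z != b by apply/negP => /eqP za; move: (hb z); rewrite E za eqxx.
  rewrite (negbTE nza) (negbTE nzb) /= in ia jb *.
  by rewrite ltnS; apply: IH; rewrite ?i0 ?j0.
Qed.
End T.

Definition xyyx : word := [:: 0; 1; 1; 0].
Fixpoint words (n k : nat) : seq word :=
  if n is n'.+1 then [seq c :: w | c <- iota 0 k, w <- words n' k] else [:: [::]].
Definition fl (sl : seq word) (p : word) : word := flatten [seq nth [::] sl z | z <- p].
Definition W2 : seq word := [:: [::]; [:: 0]; [:: 1]; [:: 0;0]; [:: 0;1]; [:: 1;0]; [:: 1;1]].
Definition sigs : seq (seq word) := [seq a :: bc | a <- W2, bc <- [seq [:: b; c] | b <- W2, c <- W2]].
Definition ctxs : seq (word * word) := [seq (take i xyyx, drop j xyyx) | i <- iota 0 5, j <- iota 0 5].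
Definition ref1 (p q : word) : bool :=
  has (fun sl => has (fun ab =>
    if ab.1 ++ fl sl p ++ ab.2 == xyyx then
      (ab.1 ++ fl sl q ++ ab.2 != xyyx) && (ab.1 ++ fl sl q ++ ab.2 != [::])
    else false) ctxs) sigs.
Definition refutes p q := if ref1 p q then true else ref1 q p.
Definition allw : seq word := flatten [seq words n 3 | n <- iota 0 6].
Definition cm (c : nat) (w : word) := count_mem c w.
Definition condA (U : word) : bool :=
  [&& 0 < cm 0 U, 0 < cm 1 U, cm 2 U == 0, cm 0 U <= 2, cm 1 U <= 2,
      ~~ ((cm 0 U == 2) && (cm 1 U == 2)) & pos U (0,1) < pos U (1,1)].
Definition condB (U : word) : bool :=
  [&& cm 0 U == 2, cm 1 U == 2, cm 2 U == 1, pos U (0,1) < pos U (1,1),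
      pos U (1,1) < pos U (2,1), pos U (2,1) < pos U (1,2) & pos U (0,2) < pos U (2,1)].
Definition good (U V : word) : bool :=
  if [&& cm 0 V == cm 0 U, cm 1 V == cm 1 U & cm 2 V == cm 2 U] then
    (if pos V (0,1) < pos V (1,1) then true else refutes U V) else true.
Definition check (cond : word -> bool) : bool :=
  all (fun U => if cond U then all (good U) (words (size U) 3) else true) allw.
Lemma checkA : check condA = true. Proof. vm_compute. reflexivity. Qed.
Lemma checkB : check condB = true. Proof. vm_compute. reflexivity. Qed.

Lemma ref1_sound S p q : isoterm S xyyx -> satisfies S p q -> ref1 p q -> False.
Proof.
move=> iso spq /hasP [sl _] /hasP [[a b] _] /=.
case: ifP => // /eqP E /andP[ne nn].
have := iso _ nn; rewrite -[X in satisfies S X _]E => H.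
by move: ne; rewrite H ?eqxx //; apply: sat_ctx.
Qed.

Lemma use_check cond S U V : check cond = true -> isoterm S xyyx -> satisfies S U V ->
  U \in allw -> cond U -> V \in words (size U) 3 ->
  cm 0 V = cm 0 U -> cm 1 V = cm 1 U -> cm 2 V = cm 2 U -> pos V (0,1) < pos V (1,1).
Proof.
move=> ck iso sUV hU hc hV c0 c1 c2.
have := allP ck U hU; rewrite hc => /allP /(_ V hV); rewrite /good.
rewrite c0 c1 c2 !eqxx /=; case: ifP => // _; rewrite /refutes.
case: ifP => [r|_ r]; exfalso; [exact: (ref1_sound iso sUV r) | exact: (ref1_sound iso (sat_sym sUV) r)].
Qed.

Lemma mem_words k w : all (fun c => c < k) w -> w \in words (size w) k.
Proof.
elim: w => [|z w IH] //= /andP[zk /IH wk].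
by apply: allpairs_f => //; rewrite mem_iota.
Qed.

Lemma size3 w : all (fun c => c < 3) w -> size w = cm 0 w + cm 1 w + cm 2 w.
Proof.
rewrite /cm; elim: w => [|z w IH] //= /andP[zk /IH ->].
by case: z zk => [|[|[|z]]] //= _; rewrite ?add0n ?add1n ?addSn ?addnS.
Qed.

Lemma mem_allw w : all (fun c => c < 3) w -> size w < 6 -> w \in allw.
Proof.
move=> a s; apply/flatten_mapP; exists (size w); first by rewrite mem_iota.
exact: mem_words.
Qed.

Lemma all_pmap (pi : nat -> option nat) w : (forall z c, pi z = Some c -> c < 3) ->
  all (fun c => c < 3) (pmap pi w).
Proof.
move=> H; elim: w => [|z w IH] //=; case E: (pi z) => [c|] //=.
by rewrite IH (H _ _ E).
Qed.

Lemma all_nseq0 s : all (pred1 0) s -> s = nseq (count_mem 0 s) 0.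
Proof. by elim: s => [|z s IH] //= /andP[/eqP -> /IH {1}->]. Qed.

Lemma size_fl1 (c : nat) (s : word) : size (flatten [seq [:: c] | _ <- s]) = size s.
Proof. by elim: s => //= z s ->. Qed.

Lemma occ_pres S u v x : isoterm S xyyx -> is_word v -> satisfies S u v ->
  0 < occ u x <= 2 -> occ v x = occ u x.
Proof.
move=> iso hv huv ox.
pose pi := fun z => if z == x then Some 0 else None.
have sUV := sat_pmap pi huv.
have cnt w : occ w x = count_mem 0 (pmap pi w).
  by rewrite count_pmap /occ; apply: eq_count => z; rewrite /pi /=; case: eqP.
have al w : all (pred1 0) (pmap pi w).
  by elim: w => [|z w IH] //=; rewrite /pi; case: (z == x) => /=; rewrite ?IH.
move: sUV; rewrite (all_nseq0 (al u)) (all_nseq0 (al v)) -!cnt.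
move: ox; case: (occ u x) => [|[|[|n]]] // _ sUV.
- have H := sat_ctx [::] [:: 1; 1; 0] (fun _ => [:: 0]) sUV.
  have := iso _ _ H; rewrite /is_word -size_eq0 !size_cat /= addn3 => /(_ isT).
  by move/(f_equal size); rewrite !size_cat size_fl1 size_nseq /= addn3 => -[].
- have H := sat_ctx [:: 0] [:: 0] (fun _ => [:: 1]) sUV.
  have := iso _ _ H; rewrite /is_word -size_eq0 !size_cat /= => /(_ isT).
  by move/(f_equal size); rewrite /= size_cat size_fl1 size_nseq /= addn1 => -[].
Qed.

Lemma occ_gt0 u x : x \in u -> 0 < occ u x.
Proof. by rewrite /occ -has_count has_pred1. Qed.

Unset Implicit Arguments.
Theorem lemma3p6 (S : monoid) (u : word) (x y : nat) :
  isoterm S [:: 0; 1; 1; 0] ->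
  x \in u -> y \in u -> x != y ->
  occ u x <= 2 -> occ u y <= 2 ->
  pos u (x, 1) < pos u (y, 1) ->
  (occ u x = 2 -> occ u y = 2 ->
     exists t : nat, [/\ occ u t = 1,
       pos u (y, 1) < pos u (t, 1) < pos u (y, 2) &
       pos u (x, 2) < pos u (t, 1) < pos u (y, 2)]) ->
  stable S u [:: (x, 1); (y, 1)].
Proof.
move=> iso xu yu nxy ox oy lt1 tc.
have ox0 := occ_gt0 xu; have oy0 := occ_gt0 yu.
split.
  by move=> o; rewrite !inE => /orP[] /eqP ->; rewrite /is_occ /= ?ox0 ?oy0.
move=> v hv huv.
have cx : occ v x = occ u x by apply: (occ_pres iso hv huv); rewrite ox0.
have cy : occ v y = occ u y by apply: (occ_pres iso hv huv); rewrite oy0.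
have key : pos v (x, 1) < pos v (y, 1).
  case: (boolP ((occ u x == 2) && (occ u y == 2))) => [/andP[/eqP x2 /eqP y2]|nb].
  - case: (tc x2 y2) => t [t1 /andP[h1 h2] /andP[h3 h4]].
    have ntx : x != t by apply/eqP => ex; move: t1; rewrite -ex x2.
    have nty : y != t by apply/eqP => ex; move: t1; rewrite -ex y2.
    have ct : occ v t = occ u t by apply: (occ_pres iso hv huv); rewrite t1.
    pose pi := fun z => if z == x then Some 0 else if z == y then Some 1
                        else if z == t then Some 2 else None.
    have hx z : (pi z == Some 0) = (z == x).
      by rewrite /pi; repeat (case: ifP => // _).
    have hy z : (pi z == Some 1) = (z == y).
      rewrite /pi; case: ifP => [/eqP ->|_]; first by rewrite (negbTE nxy).
      by repeat (case: ifP => // _).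
    have ht z : (pi z == Some 2) = (z == t).
      rewrite /pi; case: ifP => [/eqP ->|_]; first by rewrite (negbTE ntx).
      case: ifP => [/eqP ->|_]; first by rewrite (negbTE nty).
      by repeat (case: ifP => // _).
    have p3 : forall z c, pi z = Some c -> c < 3.
      by move=> z c; rewrite /pi; do 3 (case: ifP => _; first by move=> [<-]).
    have sUV := sat_pmap pi huv.
    have aU := all_pmap u p3; have aV := all_pmap v p3.
    have sU := size3 aU; have sV := size3 aV.
    have U0 : cm 0 (pmap pi u) = occ u x := occ_pmapA hx u.
    have U1 : cm 1 (pmap pi u) = occ u y := occ_pmapA hy u.
    have U2 : cm 2 (pmap pi u) = occ u t := occ_pmapA ht u.
    have V0 : cm 0 (pmap pi v) = occ v x := occ_pmapA hx v.
    have V1 : cm 1 (pmap pi v) = occ v y := occ_pmapA hy v.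
    have V2 : cm 2 (pmap pi v) = occ v t := occ_pmapA ht v.
    rewrite (pos_pmap nxy hx hy) ?ox0 ?oy0 //.
    apply: (use_check checkB iso sUV).
    + by apply: mem_allw => //; rewrite sU U0 U1 U2 x2 y2 t1.
    + rewrite /condB U0 U1 U2 x2 y2 t1 /=.
      rewrite -(pos_pmap nxy hx hy) ?ox0 ?oy0 // lt1.
      rewrite -(pos_pmap nty hy ht) ?y2 ?t1 // h1.
      have nty' : t != y by rewrite eq_sym.
      rewrite -(pos_pmap nty' ht hy) ?y2 ?t1 // h2.
      by rewrite -(pos_pmap ntx hx ht) ?x2 ?t1 // h3.
    + have -> : size (pmap pi u) = size (pmap pi v) by rewrite sU sV U0 U1 U2 V0 V1 V2 cx cy ct.
      exact: mem_words.
    + by rewrite V0 U0 cx.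
    + by rewrite V1 U1 cy.
    + by rewrite V2 U2 ct.
    + by rewrite cx ox0.
    + by rewrite cy oy0.
  - pose pi := fun z => if z == x then Some 0 else if z == y then Some 1 else None.
    have hx z : (pi z == Some 0) = (z == x).
      by rewrite /pi; repeat (case: ifP => // _).
    have hy z : (pi z == Some 1) = (z == y).
      rewrite /pi; case: ifP => [/eqP ->|_]; first by rewrite (negbTE nxy).
      by repeat (case: ifP => // _).
    have p3 : forall z c, pi z = Some c -> c < 3.
      by move=> z c; rewrite /pi; do 2 (case: ifP => _; first by move=> [<-]).
    have c2 w : cm 2 (pmap pi w) = 0.
      rewrite /cm count_pmap (eq_count (a2 := pred0)) ?count_pred0 // => z.
      by rewrite /pi; repeat (case: ifP => // _).
    have sUV := sat_pmap pi huv.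
    have aU := all_pmap u p3; have aV := all_pmap v p3.
    have sU := size3 aU; have sV := size3 aV.
    have U0 : cm 0 (pmap pi u) = occ u x := occ_pmapA hx u.
    have U1 : cm 1 (pmap pi u) = occ u y := occ_pmapA hy u.
    have V0 : cm 0 (pmap pi v) = occ v x := occ_pmapA hx v.
    have V1 : cm 1 (pmap pi v) = occ v y := occ_pmapA hy v.
    rewrite (pos_pmap nxy hx hy) ?ox0 ?oy0 ?cx ?cy //.
    apply: (use_check checkA iso sUV).
    + apply: mem_allw => //; rewrite sU U0 U1 c2 addn0.
      exact: (leq_ltn_trans (leq_add ox oy)).
    + rewrite /condA U0 U1 c2 ox0 oy0 ox oy nb /=.
      by rewrite -(pos_pmap nxy hx hy) ?ox0 ?oy0.
    + have -> : size (pmap pi u) = size (pmap pi v) by rewrite sU sV U0 U1 V0 V1 !c2 cx cy.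
      exact: mem_words.
    + by rewrite V0 U0 cx.
    + by rewrite V1 U1 cy.
    + by rewrite !c2.
split; first by move=> o; rewrite !inE => /orP[] /eqP -> /=; rewrite ?cx ?cy.
split.
  by move=> o; rewrite !inE => /orP[] /eqP ->; rewrite /is_occ /= ?cx ?cy ?ox0 ?oy0.
move=> o1 o2; rewrite !inE => /orP[] /eqP -> /orP[] /eqP ->; rewrite ?ltnn ?lt1 ?key //.
by rewrite ltnNge (ltnW lt1) ltnNge (ltnW key).
Qed.
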